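(* Assume the set $\mathcal{E}_1=\{u_1<u_2<\cdots\}$ and $\mathcal{E}_3=\{v_1<v_2<\cdots\}$ are both infinite and that $n_\ell>64$ for all $\ell$. Let $k\ge2$ be an integer. For $1\le m\le 8k-4$ write $m=8q+r$ where $0\le q\le k-2$, $1\le r\le 8$ if $m\le 8k-8$, and $q=k-1$, $1\le r\le 4$ if $8k-7\le m\le 8k-4$. Then there exist strictly increasing sequences of nonnegative integers $x_0<x_1<\dots<x_{8k-4}$ and $y_0<y_1<\dots<y_{8k-4}$ with $x_0=y_0=0$ such that every integer $X$ satisfying the system of congruences \[ X\equiv 0\pmod 4,\qquad X+m\equiv 0\ \Bigl(\bmod\ \prod_{x_{m-1}<n\le x_m}u_n\cdot\prod_{y_{m-1}<n\le y_m}v_n\Bigr)\quad(1\le m\le 8k-4) \] has the following two properties: (C1) for $1\le m\le 8k-8$, $X+m$ is divisible by exactly $2^q$ of the integers $u_n$ with $n\le x_m$ and by exactly $2^q$ of the integers $v_n$ with $n\le y_m$; (C2) for $8k-7\le m\le 8k-4$ (so $m=8(k-1)+r$), $X+m$ is divisible by exactly $k^r2^{k-1}$ of the integers $u_n$ with $n\le x_m$ and by exactly $2^{k-1}$ of the integers $v_n$ with $n\le y_m$.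
   Context: $\{n_\ell\}_{\ell\ge1}$ is a strictly increasing sequence of positive odd integers, any two distinct terms of which are coprime, with $\sum_\ell 1/n_\ell<\infty$. $\mathcal{E}_1$ (resp. $\mathcal{E}_3$) is the set of terms $n_\ell$ congruent to $1$ (resp. $3$) modulo $4$, enumerated increasingly as $u_1<u_2<\cdots$ (resp. $v_1<v_2<\cdots$). *)

(* Defs.v *)
From HB Require Import structures.
From mathcomp Require Import all_boot all_order all_algebra.
Set Implicit Arguments. Unset Strict Implicit. Unset Printing Implicit Defensive.
Import Order.TTheory GRing.Theory Num.Theory.

(* Sequences are 1-indexed: the value of a sequence at index 0 is irrelevant. *)

Definition count_div (w : nat -> nat) (N : nat) (Z : int) : nat :=
  count (fun i => ((w i)%:Z %| Z)%Z) (iota 1 N).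

Definition prod_range (w : nat -> nat) (a b : nat) : nat :=
  \prod_(a.+1 <= i < b.+1) w i.

(* Main.v *)
Require Import Defs.
From HB Require Import structures.
From mathcomp Require Import all_boot all_order all_algebra zify.
Import Order.TTheory GRing.Theory Num.Theory.

Lemma dvd_prod_range (w : nat -> nat) a b i :
  a < i <= b -> w i %| prod_range w a b.
Proof.
move=> Hi; rewrite /prod_range (bigD1_seq i) ?iota_uniq //=.
  exact: dvdn_mulr.
by rewrite mem_index_iota; lia.
Qed.

Lemma natz_dvd (a b : nat) : ((a%:Z) %| (b%:Z))%Z = (a %| b).
Proof. by rewrite dvdzE. Qed.

Lemma w_mono (w : nat -> nat) (hinc : forall i, 1 <= i -> w i < w i.+1) :
  forall i j, 1 <= i -> i < j -> w i < w j.
Proof.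
move=> i j Hi; elim: j => [//|j IH] Hij.
case: (ltnP i j) => Hij'.
  apply: ltn_trans (IH Hij') (hinc j _); lia.
have -> : j = i by lia.
exact: hinc.
Qed.

Lemma count_small (w : nat -> nat) (hw : forall i, 1 <= i -> 64 < w i)
  (hinc : forall i, 1 <= i -> w i < w i.+1) N b :
  count (fun i => w i <= b) (iota 1 N) <= b - 64.
Proof.
rewrite -size_filter -(size_map w) -(size_iota 65 (b - 64)).
apply: uniq_leq_size.
  rewrite map_inj_in_uniq ?filter_uniq ?iota_uniq //.
  move=> i j; rewrite !mem_filter !mem_iota => /andP[_ /andP[Hi _]] /andP[_ /andP[Hj _]] E.
  have [Hlt|Hlt|//] := ltngtP i j.
  - by have := @w_mono w hinc _ _ Hi Hlt; rewrite E ltnn.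
  - by have := @w_mono w hinc _ _ Hj Hlt; rewrite E ltnn.
move=> z /mapP[i]; rewrite mem_filter mem_iota => /andP[Hb /andP[Hi _]] ->.
have := hw i Hi; rewrite mem_iota; lia.
Qed.

Definition cc (w x : nat -> nat) (m : nat) : nat :=
  count (fun i => has (fun m' => (x m'.-1 < i <= x m') && (w i %| m - m'))
                      (iota 1 m.-1)) (iota 1 (x m.-1)).

Lemma cc_bound (w : nat -> nat) (hw : forall i, 1 <= i -> 64 < w i)
  (hinc : forall i, 1 <= i -> w i < w i.+1) x m :
  cc w x m <= m.-1 - 64.
Proof.
apply: leq_trans (@count_small w hw hinc (x m.-1) m.-1).
apply: sub_count => i /hasP[m']; rewrite mem_iota => Hm' /andP[_ Hd].
have Hpos : 0 < m - m' by lia.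
have := dvdn_leq Hpos Hd; lia.
Qed.

Lemma cc_ext w x x' m : 0 < m -> (forall j, j < m -> x j = x' j) ->
  cc w x m = cc w x' m.
Proof.
move=> Hm E; rewrite /cc E; last by lia.
apply: eq_count => i; apply: eq_in_has => m'; rewrite mem_iota => Hm'.
by rewrite !E //; lia.
Qed.

Lemma x_mono (x : nat -> nat) M : (forall j, j < M -> x j < x j.+1) ->
  forall a b, a <= b -> b <= M -> x a <= x b.
Proof.
move=> inc a; elim=> [|b IH] Hab HbM; first by have -> : a = 0 by lia.
case: (leqP a b) => H; last by have -> : a = b.+1 by lia.
apply: leq_trans (IH H _) (ltnW (inc b _)); lia.
Qed.

Lemma blk_exists (x : nat -> nat) M : x 0 = 0 ->
  (forall j, j < M -> x j < x j.+1) ->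
  forall m, m <= M -> forall i, 0 < i <= x m ->
  exists2 m', 0 < m' <= m & x m'.-1 < i <= x m'.
Proof.
move=> x0 inc; elim=> [|m IH] HmM i Hi; first by rewrite x0 in Hi; lia.
case: (leqP i (x m)) => H.
  have [m' Hm' Hb] := IH (ltnW HmM) i (ltac:(lia)).
  by exists m' => //; lia.
by exists m.+1 => //=; lia.
Qed.

Lemma blk_uniq (x : nat -> nat) M : (forall j, j < M -> x j < x j.+1) ->
  forall a b i, 0 < a <= M -> 0 < b <= M ->
  x a.-1 < i <= x a -> x b.-1 < i <= x b -> a = b.
Proof.
move=> inc a b i Ha Hb Hia Hib.
have [Hlt|Hlt|//] := ltngtP a b.
- have := @x_mono x M inc a b.-1 (ltac:(lia)) (ltac:(lia)); lia.
- have := @x_mono x M inc b a.-1 (ltac:(lia)) (ltac:(lia)); lia.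
Qed.

Lemma dvd_shift (d m' m : nat) (X : int) : m' <= m ->
  ((d%:Z) %| (X + m'%:Z)%R)%Z ->
  ((d%:Z %| (X + m%:Z)%R)%Z = (d %| m - m')).
Proof.
move=> Hm H.
have -> : (X + m%:Z = (X + m'%:Z) + (m - m')%:Z)%R.
  by rewrite -addrA -PoszD subnKC.
by rewrite rpredDl // natz_dvd.
Qed.

Lemma count_main (w x T : nat -> nat) M (X : int) : x 0 = 0 ->
  (forall m, 0 < m <= M -> x m = x m.-1 + (T m - cc w x m) /\ cc w x m < T m) ->
  (forall m, 0 < m <= M -> ((prod_range w (x m.-1) (x m))%:Z %| (X + m%:Z)%R)%Z) ->
  forall m, 0 < m <= M -> count_div w (x m) (X + m%:Z)%R = T m.
Proof.
move=> x0 hstep hdiv.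
have inc : forall j, j < M -> x j < x j.+1.
  move=> j Hj; have [E L] := hstep j.+1 (ltac:(lia)); rewrite E /=; lia.
have blkdiv : forall m' i, 0 < m' <= M -> x m'.-1 < i <= x m' ->
    ((w i)%:Z %| (X + m'%:Z)%R)%Z.
  move=> m' i Hm' Hi; apply: dvdz_trans (hdiv m' Hm').
  by rewrite natz_dvd; apply: dvd_prod_range.
move=> m Hm; have [E L] := hstep m Hm.
rewrite /count_div E iotaD count_cat.
have -> : count (fun i => ((w i)%:Z %| (X + m%:Z)%R)%Z)
    (iota (1 + x m.-1) (T m - cc w x m)) = T m - cc w x m.
  rewrite (eq_in_count (a2 := predT)) ?count_predT ?size_iota //.
  move=> i; rewrite mem_iota => Hi; apply: blkdiv => //; lia.
suff -> : count (fun i => ((w i)%:Z %| (X + m%:Z)%R)%Z) (iota 1 (x m.-1)) = cc w x m.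
  by rewrite subnKC // ltnW.
apply: eq_in_count => i; rewrite mem_iota => Hi.
have [m' Hm' Hb] := @blk_exists x M x0 inc m.-1 (ltac:(lia)) i (ltac:(lia)).
rewrite (@dvd_shift (w i) m' m X (ltac:(lia))); last by apply: blkdiv => //; lia.
apply/idP/hasP => [Hd | [m'' Hm'' /andP[Hb'' Hd]]].
  by exists m' => //; rewrite ?mem_iota ?Hb ?Hd //; lia.
move: Hm''; rewrite mem_iota => Hm''.
by have <- : m'' = m' by apply: (@blk_uniq x M inc m'' m' i) => //; lia.
Qed.

Lemma exists_x (w T : nat -> nat) (hw : forall i, 1 <= i -> 64 < w i)
  (hinc : forall i, 1 <= i -> w i < w i.+1) :
  forall M, (forall m, 0 < m <= M -> m.-1 - 64 < T m) ->
  exists x : nat -> nat, x 0 = 0 /\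
    (forall m, 0 < m <= M -> x m = x m.-1 + (T m - cc w x m) /\ cc w x m < T m).
Proof.
elim=> [|M IH] HT.
  by exists (fun _ => 0); split => // m; lia.
have [x [x0 Hx]] : exists x : nat -> nat, x 0 = 0 /\
    (forall m, 0 < m <= M -> x m = x m.-1 + (T m - cc w x m) /\ cc w x m < T m).
  by apply: IH => m Hm; apply: HT; lia.
pose x' j := if j <= M then x j else x M + (T M.+1 - cc w x M.+1).
have Hcc : forall m, 0 < m <= M.+1 -> cc w x' m = cc w x m.
  move=> m Hm; apply: cc_ext; first by lia.
  by move=> j Hj; rewrite /x' ifT //; lia.
exists x'; split; first by rewrite /x'.
move=> m Hm; rewrite Hcc //.
case: (leqP m M) => HmM.
  by rewrite /x' ifT // ifT; [apply: Hx; lia | lia].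
have -> : m = M.+1 by lia.
rewrite /x' ifF ?ltnn //= ifT //; split => //.
apply: leq_ltn_trans (HT M.+1 (ltac:(lia))).
exact: (@cc_bound w hw hinc).
Qed.

Lemma pow_bound q : 8 * q < 2 ^ q + 57.
Proof.
case: (leqP q 7) => H.
  have: 0 <= 2 ^ q by []. lia.
have -> : q = 8 + (q - 8) by lia.
rewrite expnD.
have := ltn_expl (q - 8) (isT : 1 < 2).
have : 2 ^ 8 = 256 by []. lia.
Qed.

Lemma big_gt64 (n w : nat -> nat) (n_big : forall l, 1 <= l -> 64 < n l)
  (P : nat -> Prop)
  (w_enum : forall a, (exists2 l, 1 <= l & n l = a /\ P a)
                      <-> (exists2 i, 1 <= i & w i = a)) :
  forall i, 1 <= i -> 64 < w i.
Proof.
move=> i Hi; have [l Hl [E _]] := (proj2 (w_enum (w i))) (ex_intro2 _ _ i Hi erefl).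
by rewrite -E; apply: n_big.
Qed.

Theorem lemma1 (n u v : nat -> nat) (k : nat)
  (n_incr : forall l, 1 <= l -> n l < n l.+1)
  (n_pos : forall l, 1 <= l -> 0 < n l)
  (n_odd : forall l, 1 <= l -> odd (n l))
  (n_cop : forall i j, 1 <= i -> 1 <= j -> i != j -> coprime (n i) (n j))
  (n_sum : exists B : rat, forall N,
      (\sum_(1 <= l < N) ((n l)%:R)^-1 <= B)%R)
  (n_big : forall l, 1 <= l -> 64 < n l)
  (u_incr : forall i, 1 <= i -> u i < u i.+1)
  (u_enum : forall a, (exists2 l, 1 <= l & n l = a /\ a %% 4 = 1)
                      <-> (exists2 i, 1 <= i & u i = a))
  (v_incr : forall i, 1 <= i -> v i < v i.+1)
  (v_enum : forall a, (exists2 l, 1 <= l & n l = a /\ a %% 4 = 3)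
                      <-> (exists2 i, 1 <= i & v i = a))
  (hk : 2 <= k) :
  exists x y : nat -> nat,
    [/\ x 0 = 0, y 0 = 0,
        (forall i, i < 8 * k - 4 -> x i < x i.+1),
        (forall i, i < 8 * k - 4 -> y i < y i.+1) &
    forall X : int,
      (4 %| X)%Z ->
      (forall m, 1 <= m <= 8 * k - 4 ->
         ((prod_range u (x m.-1) (x m) * prod_range v (y m.-1) (y m))%:Z
            %| (X + m%:Z)%R)%Z) ->
      (forall m, 1 <= m <= 8 * k - 8 ->
         count_div u (x m) ((X + m%:Z)%R) = 2 ^ ((m - 1) %/ 8) /\
         count_div v (y m) ((X + m%:Z)%R) = 2 ^ ((m - 1) %/ 8)) /\
      (forall m, 8 * k - 7 <= m <= 8 * k - 4 ->
         count_div u (x m) ((X + m%:Z)%R) = k ^ (m - 8 * (k - 1)) * 2 ^ (k - 1) /\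
         count_div v (y m) ((X + m%:Z)%R) = 2 ^ (k - 1))].
Proof.
have hu := @big_gt64 n u n_big _ u_enum.
have hv := @big_gt64 n v n_big _ v_enum.
pose Tu m := if m <= 8 * k - 8 then 2 ^ ((m - 1) %/ 8)
             else k ^ (m - 8 * (k - 1)) * 2 ^ (k - 1).
pose Tv m := if m <= 8 * k - 8 then 2 ^ ((m - 1) %/ 8) else 2 ^ (k - 1).
have B1 : forall m, 0 < m <= 8 * k - 4 -> m <= 8 * k - 8 ->
    m.-1 - 64 < 2 ^ ((m - 1) %/ 8).
  move=> m Hm _; have := pow_bound ((m - 1) %/ 8).
  have := divn_eq (m - 1) 8; have := ltn_pmod (m - 1) (isT : 0 < 8); lia.
have B2 : forall m, 0 < m <= 8 * k - 4 -> m.-1 - 64 < 2 ^ (k - 1).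
  move=> m Hm; have := pow_bound (k - 1); lia.
have [x [x0 Hx]] := @exists_x u Tu hu u_incr (8 * k - 4) (fun m Hm =>
  ltac:(rewrite /Tu; case: ifP => H; [exact: B1|];
        apply: leq_trans (B2 m Hm) _; rewrite leq_pmull // expn_gt0; lia)).
have [y [y0 Hy]] := @exists_x v Tv hv v_incr (8 * k - 4) (fun m Hm =>
  ltac:(rewrite /Tv; case: ifP => H; [exact: B1| exact: B2])).
exists x, y; split => //.
- by move=> j Hj; have [E L] := Hx j.+1 (ltac:(lia)); rewrite E /=; lia.
- by move=> j Hj; have [E L] := Hy j.+1 (ltac:(lia)); rewrite E /=; lia.
move=> X _ Hd.
have Hdu : forall m, 0 < m <= 8 * k - 4 ->
    ((prod_range u (x m.-1) (x m))%:Z %| (X + m%:Z)%R)%Z.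
  move=> m Hm; apply: dvdz_trans (Hd m Hm); rewrite natz_dvd; exact: dvdn_mulr.
have Hdv : forall m, 0 < m <= 8 * k - 4 ->
    ((prod_range v (y m.-1) (y m))%:Z %| (X + m%:Z)%R)%Z.
  move=> m Hm; apply: dvdz_trans (Hd m Hm); rewrite natz_dvd; exact: dvdn_mull.
have Cu := @count_main u x Tu _ X x0 Hx Hdu.
have Cv := @count_main v y Tv _ X y0 Hy Hdv.
split => m Hm.
  have H : m <= 8 * k - 8 by lia.
  by rewrite Cu ?Cv /Tu /Tv ?H //; lia.
have H : (m <= 8 * k - 8) = false by apply/negbTE; rewrite -ltnNge; lia.
by rewrite Cu ?Cv /Tu /Tv ?H //; lia.
Qed.
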